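(* The equation $x+y=z$ with $x,y,z\in\mathcal{B}_{2,1}$ and $x\le y$ has exactly four solutions: $$x=2-\sqrt3=[3,\overline{1,2}],\ y=\tfrac{\sqrt3-1}{2}=[\overline{2,1}],\ z=\tfrac{3-\sqrt3}{2}=[1,1,1,\overline{2,1}];$$ $$x=y=\tfrac{\sqrt3-1}{2}=[\overline{2,1}],\ z=\sqrt3-1=[\overline{1,2}];$$ $$x=y=\tfrac{2-\sqrt2}{2}=[3,\overline{2}],\ z=2-\sqrt2=[1,1,\overline{2}];$$ $$x=\tfrac{2-\sqrt2}{2}=[3,\overline{2}],\ y=\sqrt2-1=[\overline{2}],\ z=\tfrac{\sqrt2}{2}=[1,\overline{2}].$$
   Context: For irrational $x\in(0,1)$, $x=[a_1(x),a_2(x),\dots]$ denotes its simple continued fraction expansion; an overline denotes a periodically repeated block. For a positive integer $B$ and $j\ge0$, $\mathcal{B}_{B,j}$ is the set of irrational $x\in(0,1)$ with $a_k(x)\le B+1$ for all $k\le j$ and $a_k(x)\le B$ for all $k>j$. Thus $\mathcal{B}_{2,1}$ consists of the irrationals $x\in(0,1)$ with $a_1(x)\le3$ and $a_k(x)\le2$ for all $k\ge2$. *)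

(* Defs.v *)
From Stdlib Require Import Reals ZArith.
Open Scope R_scope.

Definition floorR (r : R) : Z := Int_part r.

Definition irrational (x : R) : Prop :=
  ~ exists p q : Z, q <> 0%Z /\ x = IZR p / IZR q.

Definition gauss (x : R) : R := / x - IZR (floorR (/ x)).

(* k-th partial quotient a_k(x), for k >= 1: a_k(x) = floor(1 / T^(k-1)(x)) *)
Definition cf_digit (k : nat) (x : R) : Z :=
  floorR (/ (Nat.iter (Nat.pred k) gauss x)).

Definition B_set (B j : nat) (x : R) : Prop :=
  irrational x /\ 0 < x < 1 /\
  (forall k : nat, (1 <= k)%nat -> (k <= j)%nat -> (cf_digit k x <= Z.of_nat B + 1)%Z) /\
  (forall k : nat, (j < k)%nat -> (cf_digit k x <= Z.of_nat B)%Z).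

(* Main.v *)
Require Import Defs.
From Stdlib Require Import Reals ZArith.
From Stdlib Require Import Lra Lia Psatz Znumtheory Nsatz.
Open Scope R_scope.

Lemma floorR_spec r : IZR (floorR r) <= r < IZR (floorR r) + 1.
Proof.
  unfold floorR, Int_part. destruct (archimed r) as [H1 H2].
  rewrite minus_IZR. lra.
Qed.

Lemma floorR_eq r (d : Z) : IZR d <= r < IZR d + 1 -> floorR r = d.
Proof.
  intros [H1 H2]. unfold floorR, Int_part.
  rewrite <- (tech_up r (d+1)); [lia| |]; rewrite plus_IZR; lra.
Qed.

Lemma cf_digit_SS k t : cf_digit (S (S k)) t = cf_digit (S k) (gauss t).
Proof.
  unfold cf_digit. simpl Nat.pred. rewrite Nat.iter_succ_r. reflexivity.
Qed.

Lemma cf_digit_1 t : cf_digit 1 t = floorR (/ t).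
Proof. reflexivity. Qed.

Lemma irr_add (d : Z) w : irrational w -> irrational (IZR d + w).
Proof.
  intros Hw [p [q [Hq E]]]. apply Hw. exists (p - d*q)%Z, q. split; auto.
  rewrite minus_IZR, mult_IZR. apply not_0_IZR in Hq.
  replace w with (IZR d + w - IZR d) by ring. rewrite E. field; auto.
Qed.

Lemma irr_add_inv (d : Z) w : irrational (IZR d + w) -> irrational w.
Proof.
  intros Hw [p [q [Hq E]]]. apply Hw. exists (d*q + p)%Z, q. split; auto.
  rewrite plus_IZR, mult_IZR. apply not_0_IZR in Hq. rewrite E. field; auto.
Qed.

Lemma irr_neq0 w : irrational w -> w <> 0.
Proof. intros Hw E. apply Hw. exists 0%Z, 1%Z. split; [lia|]. rewrite E. simpl. field. Qed.

Lemma irr_inv w : irrational w -> irrational (/ w).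
Proof.
  intros Hw [p [q [Hq E]]]. pose proof (irr_neq0 _ Hw) as Hw0. apply Hw.
  assert (Hp : p <> 0%Z).
  { intro. subst. simpl in E. apply Hw0. rewrite <- (Rinv_inv w), E. unfold Rdiv. rewrite Rmult_0_l. apply Rinv_0. }
  exists q, p. split; auto. apply not_0_IZR in Hq. apply not_0_IZR in Hp.
  rewrite <- (Rinv_inv w), E. field. auto.
Qed.

Lemma irr_inv_inv w : irrational (/ w) -> irrational w.
Proof. intros H. rewrite <- (Rinv_inv w). apply irr_inv; auto. Qed.

Lemma no_sq_aux (k : Z) : prime k -> forall n : nat, forall p q : Z,
  (Z.abs_nat q < n)%nat -> q <> 0%Z -> (p * p <> k * (q * q))%Z.
Proof.
  intros Hk n. induction n as [|n IH]; intros p q Hn Hq E; [lia|].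
  assert (Hk1 : (1 < k)%Z) by (destruct Hk; lia).
  assert (Hdp : (k | p)%Z).
  { destruct (prime_mult k Hk p p) as [H|H]; auto. exists (q*q)%Z. lia. }
  destruct Hdp as [p1 Hp1]. subst p.
  assert (E2 : (k * (p1 * p1) = q * q)%Z) by nia.
  assert (Hdq : (k | q)%Z).
  { destruct (prime_mult k Hk q q) as [H|H]; auto. exists (p1*p1)%Z. lia. }
  destruct Hdq as [q1 Hq1]. subst q.
  apply (IH p1 q1).
  - assert (q1 <> 0%Z) by (intro; subst; lia).
    rewrite Zabs2Nat.inj_mul in Hn. 
    assert (Z.abs_nat k >= 2)%nat by lia.
    assert (Z.abs_nat q1 >= 1)%nat by lia. nia.
  - intro; subst; lia.
  - nia.
Qed.

Lemma sqrt_irr (k : Z) : prime k -> irrational (sqrt (IZR k)).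
Proof.
  intros Hk [p [q [Hq E]]].
  assert (Hk1 : (1 < k)%Z) by (destruct Hk; lia).
  assert (Hs : sqrt (IZR k) * sqrt (IZR k) = IZR k) by (apply sqrt_sqrt; apply IZR_le; lia).
  rewrite E in Hs. apply not_0_IZR in Hq as Hq'.
  assert (IZR (p*p) = IZR (k * (q*q))).
  { rewrite !mult_IZR. rewrite <- Hs. field. auto. }
  apply eq_IZR in H. eapply (no_sq_aux k Hk (S (Z.abs_nat q))); eauto.
Qed.

Lemma step t : irrational t -> 0 < t < 1 ->
  (1 <= floorR (/ t))%Z /\ 0 < gauss t < 1 /\ irrational (gauss t) /\
  t = / (IZR (floorR (/ t)) + gauss t).
Proof.
  intros Hi Ht. set (d := floorR (/ t)).
  assert (Hinv : 1 < / t).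
  { rewrite <- Rinv_1. apply Rinv_lt_contravar; lra. }
  pose proof (floorR_spec (/ t)) as Hf. fold d in Hf.
  assert (Hg : gauss t = / t - IZR d) by reflexivity.
  assert (He : / t = IZR d + gauss t) by lra.
  assert (Hgi : irrational (gauss t)).
  { apply (irr_add_inv d). rewrite <- He. apply irr_inv; auto. }
  pose proof (irr_neq0 _ Hgi).
  split; [|split; [|split]].
  - assert (0 < IZR d) by lra. apply lt_IZR in H0. lia.
  - lra.
  - auto.
  - rewrite <- He, Rinv_inv. auto.
Qed.

Lemma cons_fl (d : Z) w : 0 < w < 1 -> (1 <= d)%Z ->
  floorR (/ / (IZR d + w)) = d /\ gauss (/ (IZR d + w)) = w.
Proof.
  intros Hw Hd. unfold gauss. rewrite Rinv_inv.
  assert (floorR (IZR d + w) = d) by (apply floorR_eq; lra).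
  rewrite H. split; auto. ring.
Qed.

Definition E (t : R) : Prop :=
  irrational t /\ 0 < t < 1 /\ forall k : nat, (1 <= k)%nat -> (cf_digit k t <= 2)%Z.

Lemma digits_shift t k : (1 <= k)%nat -> cf_digit (S k) t = cf_digit k (gauss t).
Proof. intros Hk. destruct k; [lia|]. apply cf_digit_SS. Qed.

Lemma E_dec t : E t -> exists d : Z, (d = 1 \/ d = 2)%Z /\ exists w, E w /\ t = / (IZR d + w).
Proof.
  intros [Hi [Ht Hd]]. destruct (step t Hi Ht) as [H1 [H2 [H3 H4]]].
  exists (floorR (/ t)). split.
  - pose proof (Hd 1%nat (le_n 1)). rewrite cf_digit_1 in H. lia.
  - exists (gauss t). split; auto. split; [auto|split; auto].
    intros k Hk. rewrite <- digits_shift; auto.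
Qed.

Lemma B_dec x : B_set 2 1 x -> exists d : Z, (d = 1 \/ d = 2 \/ d = 3)%Z /\ exists w, E w /\ x = / (IZR d + w).
Proof.
  intros [Hi [Ht [Hd1 Hd2]]]. destruct (step x Hi Ht) as [H1 [H2 [H3 H4]]].
  exists (floorR (/ x)). split.
  - pose proof (Hd1 1%nat (le_n 1) (le_n 1)). rewrite cf_digit_1 in H. simpl in H. lia.
  - exists (gauss x). split; auto. split; [auto|split; auto].
    intros k Hk. rewrite <- digits_shift; auto. apply Hd2. lia.
Qed.

Lemma E_cons (d : Z) w : E w -> (d = 1 \/ d = 2)%Z -> E (/ (IZR d + w)).
Proof.
  intros [Hi [Hw Hd]] Hd12. assert (Hd1 : (1 <= d)%Z) by lia.
  destruct (cons_fl d w Hw Hd1) as [F G].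
  assert (1 <= IZR d) by (apply IZR_le; lia).
  split; [|split].
  - apply irr_inv. apply irr_add. auto.
  - split. apply Rinv_0_lt_compat; lra.
    rewrite <- Rinv_1. apply Rinv_lt_contravar; lra.
  - intros k Hk. destruct k; [lia|]. destruct k.
    + rewrite cf_digit_1, F. lia.
    + rewrite cf_digit_SS, G. apply Hd. lia.
Qed.

Lemma B_cons (d : Z) w : E w -> (d = 1 \/ d = 2 \/ d = 3)%Z -> B_set 2 1 (/ (IZR d + w)).
Proof.
  intros [Hi [Hw Hd]] Hd12. assert (Hd1 : (1 <= d)%Z) by lia.
  destruct (cons_fl d w Hw Hd1) as [F G].
  assert (1 <= IZR d) by (apply IZR_le; lia).
  split; [|split; [|split]].
  - apply irr_inv. apply irr_add. auto.
  - split. apply Rinv_0_lt_compat; lra.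
    rewrite <- Rinv_1. apply Rinv_lt_contravar; lra.
  - intros k Hk Hk1. assert (k = 1%nat) by lia. subst.
    rewrite cf_digit_1, F. simpl. lia.
  - intros k Hk. destruct k; [lia|]. destruct k; [lia|].
    rewrite cf_digit_SS, G. simpl. apply Hd. lia.
Qed.

Lemma E_B w : E w -> B_set 2 1 w.
Proof.
  intros [Hi [Hw Hd]]. split; [auto|split; [auto|split]].
  - intros k Hk Hk1. simpl. pose proof (Hd k Hk). lia.
  - intros k Hk. simpl. apply Hd. lia.
Qed.

Definition s3 := sqrt 3.
Definition s2 := sqrt 2.
Definition al := (s3 - 1) / 2.
Definition be := s3 - 1.
Definition ga := s2 - 1.

Lemma s3_sq : s3 * s3 = 3.
Proof. apply sqrt_sqrt. lra. Qed.
Lemma s2_sq : s2 * s2 = 2.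
Proof. apply sqrt_sqrt. lra. Qed.
Lemma s3_pos : 0 <= s3.
Proof. apply sqrt_pos. Qed.
Lemma s2_pos : 0 <= s2.
Proof. apply sqrt_pos. Qed.
Lemma s3_bnd : 1.7320508 < s3 < 1.7320509.
Proof. pose proof s3_sq; pose proof s3_pos. split; nra. Qed.
Lemma s2_bnd : 1.4142135 < s2 < 1.4142136.
Proof. pose proof s2_sq; pose proof s2_pos. split; nra. Qed.

Lemma E_approx n : forall t, E t -> al - (3/4)^n <= t <= be + (3/4)^n.
Proof.
  pose proof s3_sq as Hq. pose proof s3_bnd as Hb.
  assert (Hab : be * (1 + al) = 1) by (unfold al, be; nra).
  assert (Hab2 : al * (2 + be) = 1) by (unfold al, be; nra).
  assert (al > 0.366 /\ al < 0.3661) by (unfold al; lra).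
  assert (be > 0.732 /\ be < 0.7321) by (unfold be; lra).
  induction n as [|n IH]; intros t Ht.
  - destruct Ht as [_ [Ht _]]. simpl. lra.
  - destruct (E_dec t Ht) as [d [Hd [w [Hw ->]]]].
    destruct (IH w Hw) as [L U]. destruct Hw as [_ [Hw01 _]].
    set (e := (3/4)^n) in *. assert (He : 0 <= e) by (apply pow_le; lra).
    simpl. fold e.
    destruct Hd as [-> | ->]; simpl.
    + set (T := / (1 + w)). assert (HT : T * (1 + w) = 1) by (unfold T; field; try lra).
      assert (0 < T) by (unfold T; apply Rinv_0_lt_compat; lra).
      assert (T < 1) by nra.
      assert (T - be = T * be * (al - w)) by nra.
      assert (T * be * (al - w) <= T * be * e) by (apply Rmult_le_compat_l; nra).
      split; nra.
    + set (T := / (2 + w)). assert (HT : T * (2 + w) = 1) by (unfold T; field; try lra).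
      assert (0 < T) by (unfold T; apply Rinv_0_lt_compat; lra).
      assert (T < 1/2) by nra.
      assert (al - T = T * al * (w - be)) by nra.
      assert (T * al * (w - be) <= T * al * e) by (apply Rmult_le_compat_l; nra).
      split; nra.
Qed.

Lemma pow34_small y : 0 < y -> exists n, (3/4)^n < y.
Proof.
  intros Hy. destruct (pow_lt_1_zero (3/4) ltac:(rewrite Rabs_pos_eq; lra) y Hy) as [N HN].
  exists N. specialize (HN N (le_n N)). rewrite Rabs_pos_eq in HN; auto. apply pow_le; lra.
Qed.

Lemma E_bounds t : E t -> al <= t <= be.
Proof.
  intros Ht. split.
  - destruct (Rle_or_lt al t) as [H|H]; auto.
    destruct (pow34_small (al - t)) as [n Hn]; [lra|].
    destruct (E_approx n t Ht). lra.
  - destruct (Rle_or_lt t be) as [H|H]; auto.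
    destruct (pow34_small (t - be)) as [n Hn]; [lra|].
    destruct (E_approx n t Ht). lra.
Qed.

Definition G (l a b c : R) := a + b + 2*c + l*(2*a*b + a*c + b*c).

Lemma Gpos_a l a b c : -0.01734 <= b <= 0.1011 -> -0.01734 <= c <= 0.1011 -> 0.0545 <= a <= 0.1011 ->
  -0.1716 <= l <= 0.0295 -> 0 < G l a b c.
Proof.
  intros. unfold G.
  assert (0 < a + b + 2*c + (-0.1716)*(2*a*b + a*c + b*c)) by nra.
  assert (0 < a + b + 2*c + (0.0295)*(2*a*b + a*c + b*c)) by nra.
  assert (0 <= (0.0295 - l) * (a + b + 2*c + (-0.1716)*(2*a*b + a*c + b*c))) by (apply Rmult_le_pos; lra).
  assert (0 <= (l + 0.1716) * (a + b + 2*c + (0.0295)*(2*a*b + a*c + b*c))) by (apply Rmult_le_pos; lra).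
  nra.
Qed.

Lemma Gpos_c l a b c : -0.01734 <= b <= 0.1011 -> -0.01734 <= a <= 0.1011 -> 0.0545 <= c <= 0.1011 ->
  -0.1716 <= l <= 0.0295 -> 0 < G l a b c.
Proof.
  intros. unfold G.
  assert (0 < a + b + 2*c + (-0.1716)*(2*a*b + a*c + b*c)) by nra.
  assert (0 < a + b + 2*c + (0.0295)*(2*a*b + a*c + b*c)) by nra.
  assert (0 <= (0.0295 - l) * (a + b + 2*c + (-0.1716)*(2*a*b + a*c + b*c))) by (apply Rmult_le_pos; lra).
  assert (0 <= (l + 0.1716) * (a + b + 2*c + (0.0295)*(2*a*b + a*c + b*c))) by (apply Rmult_le_pos; lra).
  nra.
Qed.

Lemma Gsym l a b c : G l a b c = G l b a c.
Proof. unfold G. ring. Qed.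

Definition h (x : R) := (x - ga) / (x + 1 + s2).
Definition mu := 2 * s2 - 3.

Lemma G_scale l a b c : G l (mu*a) (mu*b) (mu*c) = mu * G (l*mu) a b c.
Proof. unfold G. ring. Qed.

Lemma frac_eq A B C D : B <> 0 -> D <> 0 -> A * D = C * B -> A / B = C / D.
Proof. intros. field_simplify_eq; auto. lra. Qed.

Lemma h_phi_poly : forall r x : R, r * r = 2 -> (1 - (r - 1) * (2 + x)) * (x + 1 + r) =
 (2 * r - 3) * (x - (r - 1)) * (1 + (1 + r) * (2 + x)).
Proof. intros. nsatz. Qed.

Lemma h_phi x : 0 <= x -> h (/ (2 + x)) = mu * h x.
Proof.
  intros Hx. pose proof s2_sq. pose proof s2_bnd. unfold h, mu, ga.
  replace (/ (2 + x) - (s2 - 1)) with ((1 - (s2-1)*(2+x)) / (2+x)) by (field; try lra).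
  replace (/ (2 + x) + 1 + s2) with ((1 + (1+s2)*(2+x)) / (2+x)) by (field; try lra).
  replace ((1 - (s2 - 1) * (2 + x)) / (2 + x) / ((1 + (1 + s2) * (2 + x)) / (2 + x)))
    with ((1 - (s2 - 1) * (2 + x)) / (1 + (1 + s2) * (2 + x))) by (field; nra).
  replace ((2 * s2 - 3) * ((x - (s2 - 1)) / (x + 1 + s2))) with ((2 * s2 - 3) * (x - (s2 - 1)) / (x + 1 + s2)) by (field; nra).
  apply frac_eq; try nra.
  apply h_phi_poly; auto.
Qed.

Lemma h_zero x : 0 <= x -> h x = 0 -> x = ga.
Proof.
  intros Hx H. pose proof s2_bnd. unfold h in H.
  assert (x + 1 + s2 <> 0) by lra.
  apply (Rmult_eq_compat_r (x + 1 + s2)) in H. field_simplify in H; auto. lra.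
Qed.

Lemma le_div lo N D : 0 < D -> lo * D <= N -> lo <= N / D.
Proof. intros HD H. apply (Rmult_le_reg_r D); auto. field_simplify; lra. Qed.
Lemma div_le hi N D : 0 < D -> N <= hi * D -> N / D <= hi.
Proof. intros HD H. apply (Rmult_le_reg_r D); auto. field_simplify; lra. Qed.

Lemma E_num p : E p -> 0.3660254 <= p <= 0.7320509.
Proof. intros Hp. pose proof s3_bnd. destruct (E_bounds p Hp). unfold al, be in *. lra. Qed.

Lemma h_bounds p : E p -> -0.01734 <= h p <= 0.1011.
Proof.
  intros Hp. pose proof (E_num p Hp). pose proof s2_bnd. unfold h, ga. split.
  - apply le_div; lra.
  - apply div_le; lra.
Qed.

Lemma h_digit1 p : E p -> 0.0545 <= h (/ (IZR 1 + p)).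
Proof.
  intros Hp. pose proof (E_num p Hp). pose proof s2_bnd.
  set (u := / (IZR 1 + p)). assert (Hu : u * (1 + p) = 1) by (unfold u; simpl; field; try lra).
  assert (0.57735 <= u) by nra.
  unfold h, ga. apply le_div; lra.
Qed.

Lemma mu_bnd : -0.171573 < mu < -0.1715728.
Proof. pose proof s2_bnd. unfold mu. lra. Qed.

Lemma descent n : forall l p q r, -0.1716 <= l <= 0.0295 -> E p -> E q -> E r ->
  G l (h p) (h q) (h r) = 0 ->
  Rabs (h p) <= 0.1011 * Rabs mu ^ n /\ Rabs (h q) <= 0.1011 * Rabs mu ^ n /\ Rabs (h r) <= 0.1011 * Rabs mu ^ n.
Proof.
  induction n as [|n IH]; intros l p q r Hl Hp Hq Hr HG.
  - simpl. pose proof (h_bounds p Hp). pose proof (h_bounds q Hq). pose proof (h_bounds r Hr).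
    repeat split; apply Rabs_le; lra.
  - pose proof (h_bounds p Hp). pose proof (h_bounds q Hq). pose proof (h_bounds r Hr).
    destruct (E_dec p Hp) as [dp [Hdp [p' [Hp' Ep]]]].
    destruct (E_dec q Hq) as [dq [Hdq [q' [Hq' Eq]]]].
    destruct (E_dec r Hr) as [dr [Hdr [r' [Hr' Er]]]].
    destruct Hdp as [-> | ->].
    { exfalso. pose proof (h_digit1 p' Hp'). rewrite <- Ep in H2.
      pose proof (Gpos_a l (h p) (h q) (h r)). lra. }
    destruct Hdq as [-> | ->].
    { exfalso. pose proof (h_digit1 q' Hq'). rewrite <- Eq in H2.
      pose proof (Gpos_a l (h q) (h p) (h r)). rewrite Gsym in HG. lra. }
    destruct Hdr as [-> | ->].
    { exfalso. pose proof (h_digit1 r' Hr'). rewrite <- Er in H2.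
      pose proof (Gpos_c l (h p) (h q) (h r)). lra. }
    pose proof (E_num p' Hp'). pose proof (E_num q' Hq'). pose proof (E_num r' Hr').
    assert (Ep2 : h p = mu * h p') by (rewrite Ep; apply h_phi; lra).
    assert (Eq2 : h q = mu * h q') by (rewrite Eq; apply h_phi; lra).
    assert (Er2 : h r = mu * h r') by (rewrite Er; apply h_phi; lra).
    rewrite Ep2, Eq2, Er2, G_scale in HG. pose proof mu_bnd.
    assert (HG' : G (l * mu) (h p') (h q') (h r') = 0).
    { apply Rmult_integral in HG. destruct HG; auto. lra. }
    assert (Hl' : -0.1716 <= l * mu <= 0.0295) by (split; nra).
    destruct (IH _ _ _ _ Hl' Hp' Hq' Hr' HG') as [A [B C]].
    rewrite Ep2, Eq2, Er2, !Rabs_mult. simpl.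
    assert (0 <= Rabs mu) by apply Rabs_pos.
    repeat split; nra.
Qed.

Lemma h_vanish p : (forall n, Rabs p <= 0.1011 * Rabs mu ^ n) -> p = 0.
Proof.
  intros H. destruct (Req_dec p 0) as [|Hne]; auto. exfalso.
  assert (Hp : 0 < Rabs p) by (apply Rabs_pos_lt; auto).
  pose proof mu_bnd.
  destruct (pow_lt_1_zero mu ltac:(rewrite Rabs_left; lra) (Rabs p / 0.1011) ltac:(apply Rdiv_lt_0_compat; lra)) as [N HN].
  specialize (HN N (le_n N)). specialize (H N). rewrite RPow_abs in H.
  assert (0.1011 * Rabs (mu ^ N) < Rabs p).
  { unfold Rdiv in HN. lra. }
  lra.
Qed.

Lemma G1_poly : forall r P Q R : R, r * r = 2 -> (1+Q) + (1+P) = (1+R)*(1+P)*(1+Q) ->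
  let NP := P - (r - 1) in let NQ := Q - (r - 1) in let NR := R - (r - 1) in
  let DP := P + 1 + r in let DQ := Q + 1 + r in let DR := R + 1 + r in
  NP*DQ*DR + DP*NQ*DR + 2*DP*DQ*NR + 2*NP*NQ*DR + NP*DQ*NR + DP*NQ*NR = 0.
Proof. intros. subst NP NQ NR DP DQ DR. nsatz. Qed.

Lemma G1_eq P Q R : 0 < P -> 0 < Q -> 0 < R -> / (1 + P) + / (1 + Q) = 1 + R ->
  G 1 (h P) (h Q) (h R) = 0.
Proof.
  intros HP HQ HR Heq. pose proof s2_bnd.
  assert (Hpoly : (1+Q) + (1+P) = (1+R)*(1+P)*(1+Q)).
  { rewrite <- Heq. field. lra. }
  pose proof (G1_poly s2 P Q R s2_sq Hpoly) as Hz. simpl in Hz.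
  unfold G, h, ga.
  rewrite <- (Rmult_0_l (/ ((P+1+s2)*(Q+1+s2)*(R+1+s2)))), <- Hz.
  field. repeat split; lra.
Qed.

Lemma mainU s t v : E s -> E t -> E v ->
  / (1 + / (2 + s)) + / (1 + / (2 + t)) = 1 + / (2 + v) -> s = ga /\ t = ga /\ v = ga.
Proof.
  intros Hs Ht Hv Heq.
  pose proof (E_num s Hs). pose proof (E_num t Ht). pose proof (E_num v Hv).
  assert (HG := G1_eq (/(2+s)) (/(2+t)) (/(2+v)) ltac:(apply Rinv_0_lt_compat; lra) ltac:(apply Rinv_0_lt_compat; lra)
                ltac:(apply Rinv_0_lt_compat; lra) Heq).
  rewrite !h_phi in HG by lra. rewrite G_scale in HG. pose proof mu_bnd.
  assert (HG' : G (1 * mu) (h s) (h t) (h v) = 0).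
  { apply Rmult_integral in HG. destruct HG; auto. lra. }
  assert (Hl : -0.1716 <= 1 * mu <= 0.0295) by lra.
  assert (A : forall n, Rabs (h s) <= 0.1011 * Rabs mu ^ n /\ Rabs (h t) <= 0.1011 * Rabs mu ^ n /\ Rabs (h v) <= 0.1011 * Rabs mu ^ n)
    by (intro n; apply (descent n _ _ _ _ Hl Hs Ht Hv HG')).
  repeat split; apply h_zero; try lra; apply h_vanish; intro n; apply A.
Qed.

Lemma inv_eq x y : x * y = 1 -> x = / y.
Proof. intros H. assert (y <> 0) by (intro; subst; lra). apply (Rmult_eq_reg_r y); auto. rewrite Rinv_l; auto. Qed.

Lemma xb1 w : E w -> 0.5773 <= / (1 + w) <= 0.7321.
Proof. intros Hw. pose proof (E_num w Hw). set (X := / (1+w)). assert (X * (1+w) = 1) by (unfold X; field; try lra). split; nra. Qed.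
Lemma xb2 w : E w -> 0.366 <= / (2 + w) <= 0.4227.
Proof. intros Hw. pose proof (E_num w Hw). set (X := / (2+w)). assert (X * (2+w) = 1) by (unfold X; field; try lra). split; nra. Qed.
Lemma xb3 w : E w -> 0.2679 <= / (3 + w) <= 0.2972.
Proof. intros Hw. pose proof (E_num w Hw). set (X := / (3+w)). assert (X * (3+w) = 1) by (unfold X; field; try lra). split; nra. Qed.

Lemma al_eq : al = / (2 + be).
Proof. apply inv_eq. pose proof s3_sq. unfold al, be. nra. Qed.
Lemma be_eq : be = / (1 + al).
Proof. apply inv_eq. pose proof s3_sq. unfold al, be. nra. Qed.
Lemma ga_eq : ga = / (2 + ga).
Proof. apply inv_eq. pose proof s2_sq. unfold ga. nra. Qed.

Lemma inv_mono a b : 0 < a -> a <= b -> / b <= / a.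
Proof. intros. apply Rinv_le_contravar; lra. Qed.

Lemma id1 : / (3 + be) = 2 - s3.
Proof. pose proof s3_sq. pose proof s3_bnd. symmetry; apply inv_eq; unfold be; nra. Qed.
Lemma id2 : / (1 + / (1 + be)) = (3 - s3) / 2.
Proof. pose proof s3_sq. pose proof s3_bnd. symmetry; apply inv_eq.
  assert (/ (1 + be) * s3 = 1) by (unfold be; field; lra). nra. Qed.
Lemma id3 : / (3 + ga) = (2 - s2) / 2.
Proof. pose proof s2_sq. pose proof s2_bnd. symmetry; apply inv_eq; unfold ga; nra. Qed.
Lemma id4 : / (1 + / (1 + ga)) = 2 - s2.
Proof. pose proof s2_sq. pose proof s2_bnd. symmetry; apply inv_eq.
  assert (/ (1 + ga) * s2 = 1) by (unfold ga; field; lra). nra. Qed.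
Lemma id5 : / (1 + ga) = s2 / 2.
Proof. pose proof s2_sq. pose proof s2_bnd. symmetry; apply inv_eq; unfold ga; nra. Qed.
Lemma small_z U : 0 <= U <= 0.4227 -> 0.7028 <= / (1 + U).
Proof. intros. set (Z := / (1 + U)). assert (Z * (1 + U) = 1) by (unfold Z; field; lra). nra. Qed.

Lemma forward x y z : B_set 2 1 x -> B_set 2 1 y -> B_set 2 1 z -> x <= y -> x + y = z ->
  (x = 2 - s3 /\ y = (s3 - 1) / 2 /\ z = (3 - s3) / 2) \/
   (x = (s3 - 1) / 2 /\ y = (s3 - 1) / 2 /\ z = s3 - 1) \/
   (x = (2 - s2) / 2 /\ y = (2 - s2) / 2 /\ z = 2 - s2) \/
   (x = (2 - s2) / 2 /\ y = s2 - 1 /\ z = s2 / 2).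
Proof.
  intros Bx By Bz Hxy Hs.
  destruct (B_dec x Bx) as [a [Ha [s [Es Hx]]]].
  destruct (B_dec y By) as [b [Hb [t [Et Hy]]]].
  destruct (B_dec z Bz) as [c [Hc [u [Eu Hz]]]].
  destruct Hc as [-> | [-> | ->]];
  [pose proof (xb1 u Eu) as Bz'|pose proof (xb2 u Eu) as Bz'|pose proof (xb3 u Eu) as Bz'];
  rewrite <- Hz in Bz';
  (destruct Ha as [-> | [-> | ->]];
  [pose proof (xb1 s Es) as Bx'|pose proof (xb2 s Es) as Bx'|pose proof (xb3 s Es) as Bx'];
  rewrite <- Hx in Bx');
  (destruct Hb as [-> | [-> | ->]];
  [pose proof (xb1 t Et) as By'|pose proof (xb2 t Et) as By'|pose proof (xb3 t Et) as By'];
  rewrite <- Hy in By');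
  try (clear - Bx' By' Bz' Hxy Hs; lra).
  all: subst x y z.
  all: pose proof s3_sq; pose proof s3_bnd; pose proof s2_sq; pose proof s2_bnd.
  all: pose proof (E_bounds s Es); pose proof (E_bounds t Et); pose proof (E_bounds u Eu).
  all: pose proof (E_num s Es); pose proof (E_num t Et); pose proof (E_num u Eu).
  - (* (2,2) *)
    right; left.
    assert (A1 : / (2 + be) <= / (2 + s)) by (apply inv_mono; lra).
    assert (A2 : / (2 + be) <= / (2 + t)) by (apply inv_mono; lra).
    assert (A3 : / (1 + u) <= / (1 + al)) by (apply inv_mono; unfold al in *; lra).
    rewrite <- al_eq in A1, A2. rewrite <- be_eq in A3.
    unfold al, be in *. repeat split; lra.
  - (* (3,2) *)
    destruct (E_dec u Eu) as [d [Hd [v [Ev ->]]]].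
    pose proof (E_num v Ev). pose proof (E_bounds v Ev).
    destruct Hd as [-> | ->]. 
    + left.
      assert (A1 : / (3 + be) <= / (3 + s)) by (apply inv_mono; lra).
      assert (A2 : / (2 + be) <= / (2 + t)) by (apply inv_mono; lra).
      assert (A3 : / (1 + be) <= / (1 + v)) by (apply inv_mono; lra).
      assert (A4 : / (1 + / (1 + v)) <= / (1 + / (1 + be))).
      { assert (0 < / (1 + be)) by (apply Rinv_0_lt_compat; lra). apply inv_mono; lra. }
      rewrite <- al_eq in A2.
      rewrite id1 in A1. rewrite id2 in A4. unfold al in *. repeat split; lra.
    + right; right; right.
      assert (Heq : / (1 + / (2 + s)) + / (1 + / (2 + v)) = 1 + / (2 + t)).
      { assert (Hk : / (1 + / (2 + s)) = 1 - / (3 + s)) by (field; try split; try lra). rewrite Hk. lra. }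
      destruct (mainU s v t Es Ev Et Heq) as [-> [-> ->]].
      rewrite <- ga_eq, id3. unfold ga. repeat split; lra.
  - (* (3,3) *)
    destruct (E_dec u Eu) as [d [Hd [v [Ev ->]]]].
    pose proof (E_num v Ev). pose proof (E_bounds v Ev).
    pose proof (xb3 s Es). pose proof (xb3 t Et).
    destruct Hd as [-> | ->]. 
    + right; right; left.
      assert (Heq : / (1 + / (2 + s)) + / (1 + / (2 + t)) = 1 + / (2 + v)).
      { assert (/ (1 + / (2 + s)) = 1 - / (3 + s)) by (field; try split; try lra).
        assert (/ (1 + / (2 + t)) = 1 - / (3 + t)) by (field; try split; try lra).
        assert (/ (1 + / (1 + v)) = 1 - / (2 + v)) by (field; try split; try lra). lra. }
      destruct (mainU s t v Es Et Ev Heq) as [-> [-> ->]].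
      rewrite id3. repeat split; lra.
    + exfalso. pose proof (xb2 v Ev).
      pose proof (small_z (/ (2 + v)) ltac:(lra)). lra.
Qed.

Lemma digits_set (P : R -> Prop) :
  (forall t, P t -> exists d w, (d = 1 \/ d = 2)%Z /\ P w /\ 0 < w < 1 /\ t = / (IZR d + w)) ->
  forall k t, P t -> (cf_digit (S k) t <= 2)%Z.
Proof.
  intros HP k. induction k as [|k IH]; intros t Ht;
  destruct (HP t Ht) as [d [w [Hd [Pw [Hw ->]]]]];
  destruct (cons_fl d w Hw ltac:(lia)) as [F G].
  - rewrite cf_digit_1, F. lia.
  - rewrite cf_digit_SS, G. apply IH; auto.
Qed.

Lemma digits_set' (P : R -> Prop) :
  (forall t, P t -> exists d w, (d = 1 \/ d = 2)%Z /\ P w /\ 0 < w < 1 /\ t = / (IZR d + w)) ->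
  forall t, P t -> forall k, (1 <= k)%nat -> (cf_digit k t <= 2)%Z.
Proof. intros HP t Ht k Hk. destruct k; [lia|]. apply (digits_set P); auto. Qed.

Lemma irr_s2 : irrational s2.
Proof. apply (sqrt_irr 2 prime_2). Qed.
Lemma irr_s3 : irrational s3.
Proof. apply (sqrt_irr 3 prime_3). Qed.

Lemma irr_ga : irrational ga.
Proof. unfold ga. replace (s2 - 1) with (IZR (-1) + s2) by (simpl; ring). apply irr_add, irr_s2. Qed.
Lemma irr_be : irrational be.
Proof. unfold be. replace (s3 - 1) with (IZR (-1) + s3) by (simpl; ring). apply irr_add, irr_s3. Qed.
Lemma irr_al : irrational al.
Proof. rewrite al_eq. apply irr_inv. apply irr_add, irr_be. Qed.

Lemma E_ga : E ga.
Proof.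
  pose proof s2_bnd. split; [apply irr_ga|split; [unfold ga; lra|]].
  apply (digits_set' (fun t => t = ga)); auto.
  intros t ->. exists 2%Z, ga. split; [right; reflexivity|]. split; [reflexivity|].
  split; [unfold ga; lra| apply ga_eq].
Qed.

Lemma E_albe : E al /\ E be.
Proof.
  pose proof s3_bnd.
  assert (D : forall t, t = al \/ t = be -> forall k, (1 <= k)%nat -> (cf_digit k t <= 2)%Z).
  { apply (digits_set' (fun t => t = al \/ t = be)).
    intros t [-> | ->].
    - exists 2%Z, be. split; [right; reflexivity|]. split; [right; reflexivity|].
      split; [unfold be; lra| apply al_eq].
    - exists 1%Z, al. split; [left; reflexivity|]. split; [left; reflexivity|].
      split; [unfold al; lra| apply be_eq]. }
  split; split; [apply irr_al| |apply irr_be|].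
  - split; [unfold al; lra|]. apply D; auto.
  - split; [unfold be; lra|]. apply D; auto.
Qed.

Theorem mainTheorem7 : forall x y z : R,
  (B_set 2 1 x /\ B_set 2 1 y /\ B_set 2 1 z /\ x <= y /\ x + y = z) <->
  ((x = 2 - sqrt 3 /\ y = (sqrt 3 - 1) / 2 /\ z = (3 - sqrt 3) / 2) \/
   (x = (sqrt 3 - 1) / 2 /\ y = (sqrt 3 - 1) / 2 /\ z = sqrt 3 - 1) \/
   (x = (2 - sqrt 2) / 2 /\ y = (2 - sqrt 2) / 2 /\ z = 2 - sqrt 2) \/
   (x = (2 - sqrt 2) / 2 /\ y = sqrt 2 - 1 /\ z = sqrt 2 / 2)).
Proof.
  intros x y z. change (sqrt 3) with s3. change (sqrt 2) with s2. split.
  - intros [Bx [By [Bz [Hxy Hs]]]]. apply forward; auto.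
  - pose proof s3_bnd. pose proof s2_bnd. destruct E_albe as [Eal Ebe]. pose proof E_ga as Ega.
    assert (E1 : E (/ (1 + be))) by (apply (E_cons 1 be); auto).
    assert (E2 : E (/ (1 + ga))) by (apply (E_cons 1 ga); auto).
    intros [[-> [-> ->]] | [[-> [-> ->]] | [[-> [-> ->]] | [-> [-> ->]]]]].
    + rewrite <- id1, <- id2. fold al.
      split; [apply (B_cons 3 be); auto|].
      split; [apply E_B; auto|].
      split; [apply (B_cons 1 (/ (1 + be))); auto|].
      rewrite id1, id2. unfold al. split; lra.
    + fold al. fold be. split; [apply E_B; auto|]. split; [apply E_B; auto|].
      split; [apply E_B; auto|]. unfold al, be. split; lra.
    + rewrite <- id3, <- id4.
      split; [apply (B_cons 3 ga); auto|].
      split; [apply (B_cons 3 ga); auto|].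
      split; [apply (B_cons 1 (/ (1 + ga))); auto|].
      rewrite id3, id4. split; lra.
    + rewrite <- id3, <- id5. fold ga.
      split; [apply (B_cons 3 ga); auto|].
      split; [apply E_B; auto|].
      split; [apply E_B; auto|].
      rewrite id3, id5. unfold ga. split; lra.
Qed.
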